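(* Let $k\in\mathbb{N}$ and $0\le i<k$. Define $\mathrm{bit}_i:\mathbb{Z}_{2^k}\to\{-1,1\}$ by $\mathrm{bit}_i(x)=(-1)^{x_i}$, where $x=\sum_{j=0}^{k-1}x_j2^j$ with $x_j\in\{0,1\}$. Let $\alpha\in\mathbb{Z}_{2^k}$. Then $\widehat{\mathrm{bit}_i}(\alpha)=0$ unless $\alpha$ is an odd multiple of $2^{k-i-1}$, in which case $|\widehat{\mathrm{bit}_i}(\alpha)|=O(2^{k-i}/|\alpha|_{2^k})$, i.e. $|\widehat{\mathrm{bit}_i}(\alpha)|\le c\,2^{k-i}/|\alpha|_{2^k}$ for an absolute constant $c$ independent of $k,i,\alpha$.
   Context: $\mathbb{Z}_N=\{0,\dots,N-1\}$ with addition mod $N$. For $f:\mathbb{Z}_N\to\mathbb{C}$, $\widehat f(\alpha)=\frac1N\sum_{x\in\mathbb{Z}_N}f(x)\exp(-2\pi i\alpha x/N)$. For $N\in\mathbb{N}$ and $x\in\mathbb{R}$, $|x|_N=\min\{|x-Nz|:z\in\mathbb{Z}\}$. *)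

(* Defs.v *)
From HB Require Import structures.
From mathcomp Require Import all_boot all_order all_algebra.
From mathcomp Require Import all_classical all_reals all_analysis.
From mathcomp Require Import complex.
Set Implicit Arguments. Unset Strict Implicit. Unset Printing Implicit Defensive.
Import Order.TTheory GRing.Theory Num.Theory.
Local Open Scope ring_scope.

Definition expi (R : realType) (t : R) : R[i] := (cos t +i* sin t)%C.

Definition fourier (R : realType) (N : nat) (f : 'I_N -> R[i]) (a : 'I_N) : R[i] :=
  (N%:R)^-1 * \sum_(x < N) f x * expi (- (2 * pi * (a : nat)%:R * (x : nat)%:R / N%:R)).

Definition bit (R : realType) (k i : nat) (x : 'I_(2 ^ k)) : R[i] :=
  (- 1) ^+ (odd ((x : nat) %/ 2 ^ i)).

Definition distN (R : realType) (N : nat) (x : R) : R :=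
  inf [set `|x - N%:R * z%:~R| | z in [set: int]]%classic.

Definition odd_multiple (a d : nat) : Prop := exists m : nat, odd m /\ a = (m * d)%N.

(* Main.v *)
Require Import Defs.
From HB Require Import structures.
From mathcomp Require Import all_boot all_order all_algebra.
From mathcomp Require Import all_classical all_reals all_analysis.
From mathcomp Require Import complex.
From mathcomp Require Import ring lra zify.
Import Order.TTheory GRing.Theory Num.Theory.
Local Open Scope ring_scope.
Set Warnings "-notation-overridden,-ambiguous-paths,-notation-incompatible-prefix".

Section S.
Variable R : realType.
Local Open Scope complex_scope.

Lemma expiD (x y : R) : expi (x + y) = expi x * expi y.
Proof.
rewrite /expi cosD sinD /=. apply/eqP; rewrite eq_complex /=. apply/andP; split; apply/eqP; ring.
Qed.

Lemma expi0 : expi (0 : R) = 1.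
Proof. by rewrite /expi cos0 sin0. Qed.

Lemma expi2pin (n : nat) : expi (2 * pi * n%:R : R) = 1.
Proof.
elim: n => [|n IH]; first by rewrite mulr0 expi0.
have -> : 2 * pi * n.+1%:R = 2 * pi * n%:R + pi *+ 2 :> R.
  rewrite -natr1; ring.
by rewrite expiD IH mul1r /expi cos2pi sin2pi.
Qed.

Lemma norm_expi (t : R) : `|expi t| = 1.
Proof.
by rewrite normc_def /= cos2Dsin2 sqrtr1.
Qed.

Definition E (N n : nat) : R[i] := expi (- (2 * pi * n%:R / N%:R)).

Lemma E_add N m n : E N (m + n) = E N m * E N n.
Proof. by rewrite /E -expiD natrD; congr expi; rewrite !mulrDr !mulrDl opprD. Qed.

Lemma E_mulN N q : (0 < N)%N -> E N (q * N) = 1.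
Proof.
move=> N0; rewrite /E natrM.
have -> : 2 * pi * (q%:R * N%:R) / N%:R = 2 * pi * q%:R :> R.
  by rewrite mulrA mulfK // pnatr_eq0 -lt0n.
transitivity (expi (-(2*pi*q%:R)) * expi (2*pi*q%:R : R)); first by rewrite expi2pin mulr1.
by rewrite -expiD addNr expi0.
Qed.

Lemma E_mod N n : (0 < N)%N -> E N n = E N (n %% N).
Proof.
move=> N0; rewrite {1}(divn_eq n N) E_add. rewrite E_mulN //. rewrite mul1r. by [].
Qed.

Lemma E_modeq N m n : (0 < N)%N -> m = n %[mod N] -> E N m = E N n.
Proof. by move=> N0 h; rewrite (@E_mod N m N0) h -E_mod. Qed.

Lemma norm_E N n : `|E N n| = 1.
Proof. exact: norm_expi. Qed.

Lemma sin_quarter : 1/2 <= sin (pi / 4 : R).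
Proof.
have h1 : sin (pi/2 : R) = (cos (pi/4) * sin (pi/4)) *+ 2.
  by rewrite -sin_mulr2n; congr sin; rewrite mulr2n; field.
have s0 : 0 <= sin (pi/4 : R).
  apply: sin_ge0_pi; have := pi_gt0 R; move=> p0; apply/andP; split; lra.
have c1 := cos_le1 (pi/4 : R).
rewrite sin_pihalf in h1.
have : 1 <= sin (pi/4 : R) *+ 2.
  have := ler_wpM2r s0 c1; rewrite mul1r => hh. rewrite mulr2n in h1; rewrite mulr2n; lra.
rewrite mulr2n; lra.
Qed.

Lemma sin_big (v : R) : pi / 4 <= v <= pi / 2 -> v / pi <= sin v.
Proof.
move=> /andP[h1 h2].
have p0 := pi_gt0 R.
have hs : sin (pi/4) <= sin v.
  rewrite leNgt ltr_sin ?in_itv /=; first by rewrite -leNgt.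
  1,2: by apply/andP; split; lra.
have := sin_quarter.
have : v / pi <= 1/2 by rewrite ler_pdivrMr //; lra.
lra.
Qed.

Lemma sin_lb j (v : R) : pi / 2 ^+ j.+2 <= v <= pi / 2 -> v / pi <= sin v.
Proof.
have p0 := pi_gt0 R.
elim: j v => [|j IH] v /andP[h1 h2].
  apply: sin_big; rewrite h2 andbT.
  have e : pi / 2 ^+ 2 = pi / 4 :> R by rewrite expr2; field.
  by rewrite -e.
case: (lerP (pi/4) v) => hv.
  by apply: sin_big; rewrite hv h2.
have X0 : 0 < (2 : R) ^+ j.+2 by apply: exprn_gt0.
have e : pi / 2 ^+ j.+2 = 2 * (pi / 2 ^+ j.+3) :> R.
  by rewrite [in RHS]exprS; field; rewrite gt_eqF.
have q0 : 0 < pi / 2 ^+ j.+3 :> R by apply: divr_gt0 => //; apply: exprn_gt0.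
have := IH (2 * v); rewrite e.
have -> : 2 * v = v *+ 2 by rewrite mulr2n; ring.
rewrite sin_mulr2n.
have s0 : 0 <= sin v by apply: sin_ge0_pi; apply/andP; split; lra.
have := ler_wpM2r s0 (cos_le1 v); rewrite mul1r => hh.
have -> : v *+ 2 / pi = 2 * (v / pi) by rewrite mulr2n; ring.
rewrite !mulr2n.
move=> H; have : 2 * (pi / 2 ^+ j.+3) <= v + v <= pi / 2 by apply/andP; split; lra.
move/H; lra.
Qed.

Lemma sin_frac (N q : nat) : (0 < q)%N -> (2 * q <= N)%N ->
  q%:R / N%:R <= sin (pi * q%:R / N%:R : R).
Proof.
move=> q0 qN.
have p0 := pi_gt0 R.
have N0 : (0 < N)%N by lia.
have Nr : 0 < N%:R :> R by rewrite ltr0n.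
have qr : 1 <= q%:R :> R by rewrite ler1n.
have qNr : 2 * q%:R <= N%:R :> R by rewrite -natrM ler_nat.
have -> : q%:R / N%:R = (pi * q%:R / N%:R) / pi :> R.
  by rewrite [RHS]mulrAC [pi * _]mulrC mulfK // gt_eqF.
apply: (sin_lb N); apply/andP; split.
  have A0 : 0 < 2 ^+ N.+2 :> R by apply: exprn_gt0.
  have NA : N%:R <= 2 ^+ N.+2 :> R.
    rewrite -natrX ler_nat; apply: ltnW; apply: (leq_trans (ltn_expl N (isT : (1 < 2)%N))); rewrite leq_exp2l //; lia.
  rewrite ler_pdivlMr // mulrAC ler_pdivrMr //.
  rewrite -mulrA; apply: ler_wpM2l; first exact: ltW.
  rewrite -[N%:R]mul1r; apply: ler_pM => //; lra.
rewrite ler_pdivrMr // mulrAC ler_pdivlMr //.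
rewrite -!mulrA; apply: ler_wpM2l; first exact: ltW.
lra.
Qed.

Lemma norm1E (N r : nat) : (0 < r)%N -> (r < N)%N ->
  ((2 * minn r (N - r))%:R / N%:R)%:C <= `|1 - E N r|.
Proof.
move=> r0 rN.
have N0 : (0 < N)%N by lia.
have Nr : 0 < N%:R :> R by rewrite ltr0n.
set s := pi * r%:R / N%:R : R.
have eE : E N r = expi (- (s *+ 2)).
  by rewrite /E /s mulr2n; congr expi; congr -%R; ring.
have -> : 1 - E N r = (2 * sin s ^+ 2) +i* (cos s * sin s *+ 2).
  rewrite eE /expi cosN sinN cos_mulr2n sin_mulr2n.
  apply/eqP; rewrite eq_complex /=; apply/andP; split; apply/eqP.
    rewrite cos2sin2; ring.
  ring.
rewrite normc_def /= lecR.
have -> : (2 * sin s ^+ 2) ^+ 2 + (cos s * sin s *+ 2) ^+ 2 = (2 * sin s) ^+ 2.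
  transitivity (4 * sin s ^+ 4 + 4 * cos s ^+ 2 * sin s ^+ 2); first by rewrite mulr2n; ring.
  rewrite cos2sin2; ring.
rewrite sqrtr_sqr; apply: le_trans (ler_norm _).
rewrite natrM -mulrA; apply: ler_wpM2l; first lra.
case: (leqP (2 * r) N) => h.
  have -> : minn r (N - r) = r by apply/minn_idPl; lia.
  exact: sin_frac.
have -> : minn r (N - r) = (N - r)%N by apply/minn_idPr; lia.
have -> : s = pi - pi * (N - r)%:R / N%:R.
  by rewrite /s natrB ?(ltnW rN) //; field; rewrite gt_eqF.
rewrite sinB sinpi cospi mul0r sub0r mulN1r opprK.
apply: sin_frac; lia.
Qed.

Lemma distN_eq (N a : nat) : (0 < a)%N -> (a < N)%N ->
  distN N a%:R = (minn a (N - a))%:R :> R.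
Proof.
move=> a0 aN.
set m := (minn a (N - a))%:R : R.
have ma : m <= a%:R by rewrite ler_nat geq_minl.
have mNa : m <= N%:R - a%:R by rewrite -natrB ?(ltnW aN) // ler_nat geq_minr.
have Nr : 0 <= N%:R :> R by [].
have lb : lbound [set `|a%:R - N%:R * z%:~R| | z in [set: int]]%classic m.
  move=> _ [z _ <-].
  have n1 := ler_norm (a%:R - N%:R * z%:~R : R).
  have n2 := ler_norm (- (a%:R - N%:R * z%:~R) : R); rewrite normrN in n2.
  case: (lerP z 0) => hz.
    have hz' : z%:~R <= 0 :> R by rewrite lerz0.
    have : N%:R * z%:~R <= 0 :> R by apply: mulr_ge0_le0.
    lra.
  have hz' : 1 <= z%:~R :> R by rewrite ler1z; lia.
  have : N%:R <= N%:R * z%:~R :> R.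
    by rewrite -[X in X <= _]mulr1; apply: ler_wpM2l.
  lra.
apply/eqP; rewrite eq_le; apply/andP; split; last first.
  apply: lb_le_inf => //; exists `|a%:R - N%:R * 0%:~R|; by exists 0.
apply: (ge_inf (ex_intro _ m lb)).
case: (leqP a (N - a)) => h.
  exists 0 => //; rewrite mulr0 subr0 /m; have -> : minn a (N - a) = a by apply/minn_idPl.
  by rewrite ger0_norm.
exists 1 => //; rewrite mulr1 /m; have -> : minn a (N - a) = (N - a)%N by apply/minn_idPr; lia.
by rewrite distrC ger0_norm ?natrB ?(ltnW aN) // subr_ge0 ler_nat ltnW.
Qed.

Definition bitn (i y : nat) : R[i] := (- 1) ^+ odd (y %/ 2 ^ i).

Lemma norm_sgn (b : bool) : `|(- 1 : R[i]) ^+ b| = 1.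
Proof. by case: b; rewrite ?normrN1 ?normr1. Qed.

Lemma norm_bitn i y : `|bitn i y| = 1.
Proof. exact: norm_sgn. Qed.

Lemma bitn_add i y : bitn i (y + 2 ^ i) = - bitn i y.
Proof.
rewrite /bitn addnC -{1}(mul1n (2 ^ i)%N) divnMDl ?expn_gt0 //.
by rewrite oddD /=; case: odd; rewrite /= ?expr0 ?expr1 ?opprK.
Qed.

Lemma bitn_addP i y q : bitn i (y + q * 2 ^ i.+1) = bitn i y.
Proof.
rewrite /bitn addnC expnS mulnA divnMDl ?expn_gt0 //.
by rewrite oddD oddM /= andbF.
Qed.

Lemma bitn_mod k i y : (i < k)%N -> bitn i (y %% 2 ^ k) = bitn i y.
Proof.
move=> ik.
rewrite [in RHS](divn_eq y (2 ^ k)%N) addnC.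
have -> : (2 ^ k = 2 ^ (k - i.+1) * 2 ^ i.+1)%N by rewrite -expnD subnK.
by rewrite mulnA bitn_addP.
Qed.

Lemma bitn_diff i x :
  `|bitn i x.+1 - bitn i x| <= 2 * ((x.+1 %/ 2 ^ i - x %/ 2 ^ i)%N)%:R.
Proof.
rewrite /bitn divnS ?expn_gt0 //.
case: (2 ^ i %| x.+1)%N => /=.
  rewrite addnK mulr1; apply: le_trans (ler_normB _ _) _.
  by rewrite !norm_sgn.
by rewrite add0n subnn subrr normr0 mulr0.
Qed.

Lemma sum_shift N s (F : nat -> R[i]) : (0 < N)%N ->
  \sum_(x < N) F x = \sum_(x < N) F ((x + s) %% N)%N.
Proof.
move=> N0.
pose h (x : 'I_N) : 'I_N := Ordinal (ltn_pmod (x + s)%N N0).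
rewrite (reindex_inj (h := h)) //=.
move=> x y /(congr1 val) /= /eqP; rewrite eqn_modDr !modn_small // => /eqP.
exact: val_inj.
Qed.

Lemma sum_bitn_diff k i : (i <= k)%N ->
  \sum_(x < 2 ^ k) `|bitn i x.+1 - bitn i x| <= 2 * (2 ^ (k - i))%:R.
Proof.
move=> ik.
apply: le_trans (ler_sum _ (fun (x : 'I_(2 ^ k)) _ => bitn_diff i x)) _.
rewrite -mulr_sumr -natr_sum.
rewrite -(big_mkord xpredT (fun x => x.+1 %/ 2 ^ i - x %/ 2 ^ i)%N) telescope_sumn;
  last by move=> u v uv; apply: leq_div2r.
by rewrite div0n subn0 -expnB.
Qed.


Lemma E_eq1 N n : (0 < N)%N -> E N n = 1 -> (N %| n)%N.
Proof.
move=> N0; rewrite (@E_mod N n N0) => H.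
case: (posnP (n %% N)) => r0; first by rewrite /dvdn r0.
have := @norm1E N (n %% N) r0 (ltn_pmod n N0).
rewrite H subrr normr0 lecE /= => /andP[_ h].
exfalso.
have : 0 < (2 * minn (n %% N) (N - n %% N))%:R / N%:R :> R.
  apply: divr_gt0; rewrite ltr0n //.
  have := ltn_pmod n N0; lia.
lra.
Qed.

Lemma main : exists c : R, forall (k i : nat), (i < k)%N -> forall a : 'I_(2 ^ k),
    (~ odd_multiple a (2 ^ (k - i - 1)) -> fourier (@bit R k i) a = 0) /\
    (odd_multiple a (2 ^ (k - i - 1)) ->
       `|fourier (@bit R k i) a| <=
         ((c * (2 ^ (k - i))%:R / distN (2 ^ k) (a : nat)%:R)%:C)%C).
Proof.
exists 1 => k i ik a.
have N0 : (0 < 2 ^ k)%N by rewrite expn_gt0.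
set S := \sum_(x < 2 ^ k) bitn i x * E (2 ^ k) (a * x).
have fE : fourier (@bit R k i) a = (2 ^ k)%:R^-1 * S.
  rewrite /fourier /S; congr (_ * _); apply: eq_bigr => x _.
  by rewrite /E natrM mulrA.
have ek : (2 ^ k = 2 ^ (k - i - 1) * 2 ^ i.+1)%N.
  by rewrite -expnD; congr (2 ^ _)%N; lia.
split.
  move=> nodd; rewrite fE.
  have hS : S = - (E (2 ^ k) (a * 2 ^ i) * S).
    rewrite {1}/S (@sum_shift (2 ^ k) (2 ^ i) (fun y => bitn i y * E (2 ^ k) (a * y)) N0).
    rewrite /S mulr_sumr -sumrN; apply: eq_bigr => x _.
    rewrite bitn_mod // bitn_add.
    rewrite (@E_modeq (2 ^ k) (a * ((x + 2 ^ i) %% 2 ^ k)) (a * (x + 2 ^ i))) //;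
      last by rewrite modnMmr.
    rewrite mulnDr E_add; ring.
  case: (S =P 0) => [->|Sn0]; first by rewrite mulr0.
  exfalso.
  have h0 : S + E (2 ^ k) (a * 2 ^ i) * S = 0 by rewrite {1}hS addNr.
  have : S * (1 + E (2 ^ k) (a * 2 ^ i)) = 0 by rewrite -h0; ring.
  move/eqP; rewrite mulf_eq0 (negbTE (introN eqP Sn0)) /= addrC addr_eq0 => /eqP e1.
  have e2 : E (2 ^ k) (a * 2 ^ i + a * 2 ^ i) = 1 by rewrite E_add e1 mulrNN mulr1.
  have := @E_eq1 (2 ^ k) _ N0 e2.
  rewrite addnn -mul2n mulnCA -expnS => hd.
  have : (2 ^ (k - i - 1) * 2 ^ i.+1 %| a * 2 ^ i.+1)%N by rewrite -ek.
  rewrite dvdn_pmul2r ?expn_gt0 // => /dvdnP [m am].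
  case om : (odd m); first by apply: nodd; exists m.
  have := odd_double_half m; rewrite om add0n -muln2 => em.
  have : (a * 2 ^ i = m./2 * 2 ^ k)%N.
    by rewrite am -{1}em ek expnS; ring.
  move=> eai; move: e1; rewrite eai E_mulN // => /eqP.
  by rewrite -subr_eq0 opprK -mulr2n pnatr_eq0.
case=> m [om am].
have a0 : (0 < a)%N by rewrite am muln_gt0 expn_gt0 andbT; case: (m) om.
rewrite (@distN_eq (2 ^ k) a a0 (ltn_ord a)) fE.
have hT : S = E (2 ^ k) a * \sum_(x < 2 ^ k) bitn i x.+1 * E (2 ^ k) (a * x).
  rewrite {1}/S (@sum_shift (2 ^ k) 1 (fun y => bitn i y * E (2 ^ k) (a * y)) N0) mulr_sumr.
  apply: eq_bigr => x _.
  rewrite bitn_mod // (@E_modeq (2 ^ k) (a * ((x + 1) %% 2 ^ k)) (a * (x + 1))) ?modnMmr //.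
  rewrite addn1 mulnSr E_add; ring.
set T := \sum_(x < 2 ^ k) bitn i x.+1 * E (2 ^ k) (a * x) in hT.
have key : `|S| * `|1 - E (2 ^ k) a| <= 2 * (2 ^ (k - i))%:R.
  have -> : `|S| * `|1 - E (2 ^ k) a| = `|T - S|.
    rewrite -normrM; transitivity `|E (2 ^ k) a * (T - S)|.
      by congr `|_|; rewrite mulrBr mulrBr -hT; ring.
    by rewrite normrM norm_E mul1r.
  rewrite /T /S -sumrB; apply: le_trans (ler_norm_sum _ _ _) _.
  apply: (le_trans _ (@sum_bitn_diff k i (ltnW ik))); apply: ler_sum => x _.
  by rewrite -mulrBl normrM norm_E mulr1.
have hw := @norm1E (2 ^ k) a a0 (ltn_ord a).
set m0 := minn a (2 ^ k - a) in hw *.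
rewrite normrM normfV normr_nat mul1r.
rewrite fmorph_div !rmorph_nat.
rewrite fmorph_div !rmorph_nat in hw.
have m0p : 0 < m0%:R :> R[i] by rewrite ltr0n /m0; have := ltn_ord a; lia.
have Np : 0 < (2 ^ k)%:R :> R[i] by rewrite ltr0n.
have u0 : 0 <= `|S| by [].
have h1 := le_trans (ler_wpM2l u0 hw) key.
rewrite ler_pdivlMr //.
have e : `|S| * ((2 * m0)%:R / (2 ^ k)%:R) = 2 * ((2 ^ k)%:R^-1 * `|S| * m0%:R).
  by rewrite natrM; ring.
rewrite e in h1.
by rewrite -(ler_pM2l (_ : 0 < 2)) // ltr0n.
Qed.
End S.

Theorem lemma6p3 (R : realType) :
  exists c : R, forall (k i : nat), (i < k)%N -> forall a : 'I_(2 ^ k),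
    (~ odd_multiple a (2 ^ (k - i - 1)) -> fourier (@bit R k i) a = 0) /\
    (odd_multiple a (2 ^ (k - i - 1)) ->
       `|fourier (@bit R k i) a| <=
         ((c * (2 ^ (k - i))%:R / distN (2 ^ k) (a : nat)%:R)%:C)%C).
Proof. exact: main. Qed.
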